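(* Let $d\in\mathbb{R}^m$ with $d>0$, let $\ell$ be a certified lower bound for $A^\top x\le u$ with certificate matrix $\Lambda$, and suppose $f(d,\ell)=1$. Let $i\in\{1,\dots,m\}$, set $L_i:=a_i^\top y(d,\ell)-\gamma_i(d,\ell)$, and define $$\hat\lambda_i:=\gamma_i(d,\ell)\,D\,t(d,\ell)-DA^\top B(d)^{-1}a_i,\qquad \tilde\lambda_i:=\Lambda\hat\lambda_i^-+\hat\lambda_i^+ .$$ Then $A\tilde\lambda_i=-a_i$, $\tilde\lambda_i\ge 0$ and $-\tilde\lambda_i^\top u\ge L_i$; i.e., $L_i$ is a certified lower bound on constraint $i$ with certificate $\tilde\lambda_i$.
   Context: Standing assumption: $A=[a_1|\cdots|a_m]\in\mathbb{R}^{n\times m}$ has columns of unit Euclidean norm and $\{A\lambda:\lambda\ge0\}=\mathbb{R}^n$; $u\in\mathbb{R}^m$. For $d\in\mathbb{R}^m$, $D=\mathrm{diag}(d)$. For $d>0$, $\ell\in\mathbb{R}^m$: $r(\ell)=\tfrac12(u+\ell)$, $v(\ell)=\tfrac12(u-\ell)$, $B(d)=ADA^\top$, $y(d,\ell)=B(d)^{-1}ADr(\ell)$, $t(d,\ell)=A^\top y(d,\ell)-r(\ell)$, $f(d,\ell)=v(\ell)^\top Dv(\ell)-t(d,\ell)^\top Dt(d,\ell)$, and when $f(d,\ell)>0$, $\gamma_i(d,\ell)=\sqrt{f(d,\ell)\,a_i^\top B(d)^{-1}a_i}$. A scalar $\ell_i$ is a certified lower bound on constraint $i$ with certificate $\lambda_i\in\mathbb{R}^m$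 if $A\lambda_i=-a_i$, $\lambda_i\ge0$, $-\lambda_i^\top u\ge\ell_i$. A vector $\ell$ is a certified lower bound with certificate matrix $\Lambda\in\mathbb{R}^{m\times m}$ if $A\Lambda=-A$, $\Lambda\ge0$ entrywise, $-\Lambda^\top u\ge\ell$. For a vector $w$, $w^+,w^-\ge0$ are its componentwise positive and negative parts, $w=w^+-w^-$. *)

(* Defs.v *)
From HB Require Import structures.
From mathcomp Require Import all_boot all_order all_algebra.
Set Implicit Arguments. Unset Strict Implicit. Unset Printing Implicit Defensive.
Import Order.TTheory GRing.Theory Num.Theory.
Local Open Scope ring_scope.

Section Defs.
Variables (R : rcfType) (n m : nat).
Implicit Types (A : 'M[R]_(n, m)) (u d l : 'cV[R]_m).

Definition unit_columns A : Prop := forall j : 'I_m, \sum_(k < n) A k j ^+ 2 = 1.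

Definition positively_spanning A : Prop :=
  forall x : 'cV[R]_n, exists lam : 'cV[R]_m, (forall j, 0 <= lam j 0) /\ A *m lam = x.

Definition Dmx d : 'M[R]_m := diag_mx d^T.
Definition rvec u l : 'cV[R]_m := 2^-1 *: (u + l).
Definition vvec u l : 'cV[R]_m := 2^-1 *: (u - l).
Definition Bmx A d : 'M[R]_n := A *m Dmx d *m A^T.
Definition yvec A u d l : 'cV[R]_n := invmx (Bmx A d) *m A *m Dmx d *m rvec u l.
Definition tvec A u d l : 'cV[R]_m := A^T *m yvec A u d l - rvec u l.
Definition fval A u d l : R :=
  ((vvec u l)^T *m Dmx d *m vvec u l) 0 0 - ((tvec A u d l)^T *m Dmx d *m tvec A u d l) 0 0.
Definition quad_i A d (i : 'I_m) : R := ((col i A)^T *m invmx (Bmx A d) *m col i A) 0 0.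
Definition gamma A u d l (i : 'I_m) : R := Num.sqrt (fval A u d l * quad_i A d i).

Definition pospart (w : 'cV[R]_m) : 'cV[R]_m := map_mx (fun x => Num.max x 0) w.
Definition negpart (w : 'cV[R]_m) : 'cV[R]_m := map_mx (fun x => Num.max (- x) 0) w.

Definition certified_lb A u l (Lam : 'M[R]_m) : Prop :=
  [/\ A *m Lam = - A, (forall j k, 0 <= Lam j k) &
      forall j, l j 0 <= (- (Lam^T *m u)) j 0].

Definition certified_lb_i A u (i : 'I_m) (Li : R) (lam : 'cV[R]_m) : Prop :=
  [/\ A *m lam = - col i A, (forall j, 0 <= lam j 0) &
      Li <= - ((lam^T *m u) 0 0)].
End Defs.

(* Main.v *)
Require Import Defs.
From HB Require Import structures.
From mathcomp Require Import all_boot all_order all_algebra.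
From mathcomp Require Import lra ring.
Import Order.TTheory GRing.Theory Num.Theory.
Set Implicit Arguments. Unset Strict Implicit.
Local Open Scope ring_scope.

Section H.
Variables (R : rcfType) (n m : nat) (A : 'M[R]_(n, m)) (d : 'cV[R]_m).
Hypothesis hd : forall j, 0 < d j 0.

Lemma bil (x y : 'cV[R]_m) :
  (x^T *m Dmx d *m y) 0 0 = \sum_j x j 0 * d j 0 * y j 0.
Proof. rewrite mxE; apply: eq_bigr => j _; by rewrite /Dmx mul_mx_diag !mxE. Qed.

Lemma Dmul (x : 'cV[R]_m) j : (Dmx d *m x) j 0 = d j 0 * x j 0.
Proof. by rewrite /Dmx mul_diag_mx !mxE. Qed.

Lemma trD : (Dmx d)^T = Dmx d.
Proof. by rewrite /Dmx tr_diag_mx. Qed.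

Lemma trB : (Bmx A d)^T = Bmx A d.
Proof. by rewrite /Bmx !trmx_mul trmxK trD mulmxA. Qed.

Lemma quadB (x : 'cV[R]_n) :
  (x^T *m Bmx A d *m x) 0 0 = \sum_j d j 0 * (A^T *m x) j 0 ^+ 2.
Proof.
have -> : x^T *m Bmx A d *m x = (A^T *m x)^T *m Dmx d *m (A^T *m x).
  by rewrite /Bmx trmx_mul trmxK !mulmxA.
rewrite bil; apply: eq_bigr => j _; ring.
Qed.

Lemma sum_sq0 (v : 'cV[R]_m) :
  \sum_j d j 0 * v j 0 ^+ 2 = 0 -> v = 0.
Proof.
move=> h; have h0 : forall j, 0 <= d j 0 * v j 0 ^+ 2.
  by move=> j; rewrite mulr_ge0 // ?sqr_ge0 // ltW.
move/psumr_eq0P: h => /(_ (fun j _ => h0 j)) h.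
apply/matrixP => j k; rewrite (ord1 k) mxE.
have := h j isT; move/eqP; rewrite mulf_eq0 (gt_eqF (hd j)) /= sqrf_eq0.
by move/eqP.
Qed.

Hypothesis hA2 : positively_spanning A.

Lemma Bunit : Bmx A d \in unitmx.
Proof.
rewrite unitmxE unitfE; apply/negP => /det0P [v vn0 hv].
have : (v *m Bmx A d *m v^T) 0 0 = 0 by rewrite hv mul0mx mxE.
rewrite -{1}(trmxK v) quadB => /sum_sq0 h0.
have [lam [_ hlam]] := hA2 v^T.
have : v *m v^T = 0.
  have hvA : v *m A = 0 by rewrite -(trmxK (v *m A)) trmx_mul h0 trmx0.
  by rewrite -hlam mulmxA hvA mul0mx.
move=> hvv; move/negP: vn0; apply; apply/eqP.
have : (v *m v^T) 0 0 = 0 by rewrite hvv mxE.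
rewrite mxE => hs.
have h0' : forall j : 'I_n, true -> 0 <= v 0 j * v^T j 0.
  by move=> j _; rewrite mxE -expr2 sqr_ge0.
move/psumr_eq0P: hs => /(_ h0') hs.
apply/matrixP => k j; rewrite (ord1 k) mxE.
by have := hs j isT; rewrite mxE -expr2 => /eqP; rewrite sqrf_eq0 => /eqP.
Qed.


Lemma bilC (x y : 'cV[R]_m) : (x^T *m Dmx d *m y) 0 0 = (y^T *m Dmx d *m x) 0 0.
Proof. rewrite !bil; apply: eq_bigr => j _; ring. Qed.

Lemma bilL (G : R) (x y z : 'cV[R]_m) :
  ((G *: x - y)^T *m Dmx d *m z) 0 0 = G * (x^T *m Dmx d *m z) 0 0 - (y^T *m Dmx d *m z) 0 0.
Proof. rewrite !bil mulr_sumr -sumrB; apply: eq_bigr => j _; rewrite !mxE; ring. Qed.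

Lemma bilR (G : R) (x y z : 'cV[R]_m) :
  (x^T *m Dmx d *m (G *: y - z)) 0 0 = G * (x^T *m Dmx d *m y) 0 0 - (x^T *m Dmx d *m z) 0 0.
Proof. rewrite !bil mulr_sumr -sumrB; apply: eq_bigr => j _; rewrite !mxE; ring. Qed.

End H.

Lemma maxPN (R : realDomainType) (x : R) : Num.max x 0 - Num.max (- x) 0 = x.
Proof. case: leP => h1; case: leP => h2; lra. Qed.

Lemma ptw (R : realFieldType) (G dd w uu ll : R) : 0 < G -> 0 < dd ->
  2*G*(Num.max (dd*w) 0 * uu - Num.max (-(dd*w)) 0 * ll) <=
  2*G*(w*dd*(2^-1*(uu+ll))) + w*dd*w + G^2*((2^-1*(uu-ll))*dd*(2^-1*(uu-ll))).
Proof.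
move=> hG hdd.
have h20 : (2:R) != 0 by rewrite pnatr_eq0.
have er : 2^-1*(uu+ll) = (uu+ll)/2 by rewrite mulrC.
have ev : 2^-1*(uu-ll) = (uu-ll)/2 by rewrite mulrC.
rewrite er ev.
set r := (uu+ll)/2; set v := (uu-ll)/2.
have eu : uu = r + v by rewrite /r /v; field.
have el : ll = r - v by rewrite /r /v; field.
rewrite eu el; clearbody r v.
have := mulr_ge0 (ltW hdd) (sqr_ge0 (w - G*v)).
have := mulr_ge0 (ltW hdd) (sqr_ge0 (w + G*v)).
move=> H1 H2.
case: (lerP 0 (dd*w)) => h; case: (lerP 0 (-(dd*w))) => h'.
all: try nra.
have e0 : dd * w = 0 by lra.
have : w = 0 by move/eqP: e0; rewrite mulf_eq0 (gt_eqF hdd) /= => /eqP.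
move=> ->; nra.
Qed.

Unset Implicit Arguments. Set Strict Implicit.

Lemma entB (R : zmodType) p q (X Y : 'M[R]_(p,q)) a b : (X - Y) a b = X a b - Y a b.
Proof. by rewrite !mxE. Qed.
Lemma entD (R : nmodType) p q (X Y : 'M[R]_(p,q)) a b : (X + Y) a b = X a b + Y a b.
Proof. by rewrite !mxE. Qed.
Lemma entZ (R : pzRingType) p q (k : R) (X : 'M[R]_(p,q)) a b : (k *: X) a b = k * X a b.
Proof. by rewrite !mxE. Qed.

Lemma dotE (R : pzSemiRingType) p (x y : 'cV[R]_p) : (x^T *m y) 0 0 = \sum_k x k 0 * y k 0.
Proof. by rewrite mxE; apply: eq_bigr => k _; rewrite mxE. Qed.

Theorem proposition2 (R : rcfType) (n m : nat) (A : 'M[R]_(n, m)) (u : 'cV[R]_m)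
  (hA1 : unit_columns A) (hA2 : positively_spanning A)
  (d : 'cV[R]_m) (hd : forall j, 0 < d j 0)
  (l : 'cV[R]_m) (Lam : 'M[R]_m) (hl : certified_lb A u l Lam)
  (hf : fval A u d l = 1) (i : 'I_m) :
  let Li := ((col i A)^T *m yvec A u d l) 0 0 - gamma A u d l i in
  let lhat := gamma A u d l i *: (Dmx d *m tvec A u d l)
              - Dmx d *m A^T *m invmx (Bmx A d) *m col i A in
  let ltil := Lam *m negpart lhat + pospart lhat in
  certified_lb_i A u i Li ltil.
Proof.
move=> Li lhat ltil.
case: hl => hLam hLam0 hl3.
have hB := Bunit hd hA2.
have hADt : A *m Dmx d *m tvec A u d l = 0.
  rewrite /tvec mulmxBr mulmxA /yvec !mulmxA.
  have -> : A *m Dmx d *m A^T = Bmx A d by [].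
  by rewrite mulmxV // mul1mx subrr.
set B := Bmx A d.
set D := Dmx d.
set t := tvec A u d l.
set y := yvec A u d l.
set r := rvec u l.
set v := vvec u l.
set a := col i A.
set G := gamma A u d l i.
set z := invmx B *m a.
set c := A^T *m z.
have hlc : lhat = G *: (D *m t) - D *m c by rewrite /lhat /c /z !mulmxA.
have hAl : A *m lhat = - a.
  rewrite hlc mulmxBr -scalemxAr mulmxA hADt scaler0 sub0r /c /z !mulmxA.
  have -> : A *m D *m A^T = B by [].
  by rewrite mulmxV // mul1mx.
have hpg : pospart lhat - negpart lhat = lhat.
  by apply/matrixP => j k; rewrite !mxE maxPN.
split.
- by rewrite /ltil mulmxDr mulmxA hLam mulNmx addrC -mulmxBr hpg.
- move=> j; rewrite /ltil entD mxE; apply: addr_ge0.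
    apply: sumr_ge0 => k _; apply: mulr_ge0; rewrite ?mxE ?le_max ?lexx ?orbT //.
  by rewrite mxE le_max lexx orbT.
set w := G *: t - c.
have htDA : t^T *m D *m A^T = 0.
  have <- : (A *m D *m t)^T = t^T *m D *m A^T by rewrite !trmx_mul trD mulmxA.
  by rewrite hADt trmx0.
have hr : r = A^T *m y - t by rewrite /t /tvec -/y -/r opprB addrC subrK.
have hcT : c^T = a^T *m invmx B *m A by rewrite /c /z !trmx_mul trmxK trmx_inv trB.
have F1 : (t^T *m D *m r) 0 0 = - (t^T *m D *m t) 0 0.
  by rewrite {1}hr mulmxBr mulmxA htDA mul0mx entB mxE sub0r.
have F2 : (c^T *m D *m r) 0 0 = (a^T *m y) 0 0 by rewrite hcT /y /yvec !mulmxA.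
have F3 : (c^T *m D *m c) 0 0 = quad_i A d i.
  have -> : c^T *m D *m c = a^T *m invmx B *m (B *m invmx B) *m a.
    by rewrite hcT /c /z /B /Bmx !mulmxA.
  by rewrite mulmxV // mulmx1.
have F4 : (t^T *m D *m c) 0 0 = 0 by rewrite /c mulmxA htDA mul0mx mxE.
have hG : G = Num.sqrt (quad_i A d i) by rewrite /G /gamma hf mul1r.
rewrite /fval -/v -/D -/t in hf.
have hq : quad_i A d i = \sum_j d j 0 * c j 0 ^+ 2.
  by rewrite -F3 bil; apply: eq_bigr => j _; ring.
have hq0 : 0 < quad_i A d i.
  rewrite hq lt_def sumr_ge0 ?andbT; last first.
    by move=> j _; rewrite mulr_ge0 ?sqr_ge0 // ltW.
  apply/eqP => /(sum_sq0 hd) hc0.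
  have ha : A *m D *m c = a.
    rewrite /c mulmxA; change (B *m z = a).
    by rewrite /z mulmxA mulmxV // mul1mx.
  rewrite hc0 mulmx0 in ha.
  have := hA1 i; rewrite big1 => [|k _].
    by move/eqP; rewrite eq_sym oner_eq0.
  have hak : a k 0 = 0 by rewrite -ha mxE.
  by move: hak; rewrite /a mxE => ->; rewrite expr2 mulr0.
have hG2 : G ^+ 2 = quad_i A d i by rewrite hG sqr_sqrtr // ltW.
have hG0 : 0 < G by rewrite hG sqrtr_gt0.
have stepA : (ltil^T *m u) 0 0 <=
    \sum_k (pospart lhat k 0 * u k 0 - negpart lhat k 0 * l k 0).
  have -> : (ltil^T *m u) 0 0 = ((Lam *m negpart lhat)^T *m u) 0 0 + ((pospart lhat)^T *m u) 0 0.
    by rewrite !dotE -big_split; apply: eq_bigr => k _ /=; rewrite /ltil entD mulrDl.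
  rewrite trmx_mul -mulmxA !dotE -big_split; apply: ler_sum => k _ /=.
  have h1 := hl3 k; rewrite mxE in h1.
  have h2 : 0 <= negpart lhat k 0 by rewrite mxE le_max lexx orbT.
  nra.
have stepB : 2 * G * \sum_k (pospart lhat k 0 * u k 0 - negpart lhat k 0 * l k 0)
    <= 2 * G * (G - (a^T *m y) 0 0).
  apply: (@le_trans _ _ (2*G*(w^T *m D *m r) 0 0 + (w^T *m D *m w) 0 0 + G^2 * (v^T *m D *m v) 0 0)).
    rewrite !bil !mulr_sumr -!big_split; apply: ler_sum => k _ /=.
    have hlk : lhat k 0 = d k 0 * w k 0.
      by rewrite hlc (@entB _ _ _ (G *: (D *m t)) (D *m c)) entZ !Dmul /w (@entB _ _ _ (G *: t) c) entZ; ring.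
    have -> : pospart lhat k 0 = Num.max (lhat k 0) 0 by rewrite mxE.
    have -> : negpart lhat k 0 = Num.max (- lhat k 0) 0 by rewrite mxE.
    rewrite hlk.
    have -> : r k 0 = 2^-1 * (u k 0 + l k 0) by rewrite /r /rvec entZ entD.
    have -> : v k 0 = 2^-1 * (u k 0 - l k 0) by rewrite /v /vvec entZ entB.
    exact: ptw.
  rewrite /w !bilL !bilR F1 F2 F4 F3 (bilC d c t) F4 -hG2.
  have hV : (v^T *m D *m v) 0 0 = 1 + (t^T *m D *m t) 0 0 by lra.
  rewrite hV le_eqVlt; apply/orP; left; apply/eqP; ring.
rewrite ler_pM2l in stepB; last by rewrite mulr_gt0.
rewrite /Li -/a -/y -/G; lra.
Qed.
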